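(* Under the standing assumptions, $\dim F(\pi,\pi_0)\le |S^{0}(\pi)|$. Moreover, if $\dim F(\pi,\pi_0)=0$ then $|S^{0}(\pi)|=0$.
   Context: Let $n\ge 1$, $I=\{1,\dots,n\}$ and $X\subseteq\{0,1\}^n$. Standing assumptions: (a) the inequality $\pi^\top x\le \pi_0$ is valid for $X$ and supports $\mathrm{conv}(X)$, i.e. $\pi_0=\max_{x\in X}\pi^\top x$; (b) for every $i\in I$ there exist $x,x'\in X$ with $x_i=0$ and $x'_i=1$. The face is $F(\pi,\pi_0):=\{x\in\mathrm{conv}(X):\pi^\top x=\pi_0\}$. The disjunctive slack vector $\lambda(\pi)$ is defined by $\lambda^0_i(\pi):=\max_{x\in X}\{\pi^\top x: x_i=0\}$, $\lambda^1_i(\pi):=\max_{x\in X}\{\pi^\top x:x_i=1\}$, $\lambda_i(\pi):=\lambda^0_i(\pi)-\lambda^1_i(\pi)$; $S^{0}(\pi)=\{i\in I:\lambda_i(\pi)=0\}$. *)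

(* Defs.v *)
From HB Require Import structures.
From mathcomp Require Import all_boot all_order all_algebra.
Set Implicit Arguments. Unset Strict Implicit. Unset Printing Implicit Defensive.
Import Order.TTheory GRing.Theory Num.Theory.
Local Open Scope ring_scope.

Section Defs.
Variables (R : realFieldType) (n : nat).

Definition vec (x : {ffun 'I_n -> bool}) : 'rV[R]_n := \row_i (x i)%:R.

Definition dot (p y : 'rV[R]_n) : R := \sum_i p 0 i * y 0 i.

(* Maximum of a (nonempty) list of reals; 0 on the empty list (never used
   under the standing assumptions). *)
Definition seqmax (s : seq R) : R := foldr Num.max (head 0 s) s.

Definition lam (X : {set {ffun 'I_n -> bool}}) (p : 'rV[R]_n) (b : bool) (i : 'I_n) : R :=
  seqmax [seq dot p (vec x) | x : {ffun 'I_n -> bool} <- enum X & x i == b].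

Definition lambda X p i : R := lam X p false i - lam X p true i.

Definition S0 X p : {set 'I_n} := [set i | lambda X p i == 0].

Definition conv (X : {set {ffun 'I_n -> bool}}) (y : 'rV[R]_n) : Prop :=
  exists w : {ffun {ffun 'I_n -> bool} -> R},
    [/\ forall x, x \in X -> 0 <= w x,
        \sum_(x in X) w x = 1
      & y = \sum_(x in X) w x *: vec x].

Definition face X p (p0 : R) (y : 'rV[R]_n) : Prop := conv X y /\ dot p y = p0.

Definition aff_indep k (p : 'I_k.+1 -> 'rV[R]_n) : bool :=
  row_free (\matrix_(i < k, j < n) (p (lift ord0 i) 0 j - p ord0 0 j)).

Definition affdim (S : 'rV[R]_n -> Prop) (d : nat) : Prop :=
  (exists p : 'I_d.+1 -> 'rV[R]_n, (forall j, S (p j)) /\ aff_indep p) /\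
  (forall k (p : 'I_k.+1 -> 'rV[R]_n), (forall j, S (p j)) -> aff_indep p -> (k <= d)%N).

End Defs.

(* Main.v *)
Require Import Defs.
From HB Require Import structures.
From mathcomp Require Import all_boot all_order all_algebra.
Import Order.TTheory GRing.Theory Num.Theory.
Local Open Scope ring_scope.
Set Implicit Arguments. Unset Strict Implicit.

Section H.
Variables (R : realFieldType) (n : nat).

Lemma foldr_max_in (b : R) s : foldr Num.max b s \in b :: s.
Proof.
elim: s => [|a t IH] /=; first by rewrite inE.
rewrite maxEle; case: ifP => _; last by rewrite !inE eqxx orbT.
move: IH; rewrite !inE => /orP[->|->]; by rewrite ?orbT.
Qed.

Lemma foldr_max_ge (b : R) s y : y \in b :: s -> y <= foldr Num.max b s.
Proof.
elim: s => [|a t IH] /=; first by rewrite inE => /eqP ->.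
rewrite le_max => H; move: H IH; rewrite !inE => /or3P[yb|/eqP->|yt] IH.
- by rewrite IH ?inE ?yb ?orbT.
- by rewrite lexx.
- by rewrite IH ?inE ?yt ?orbT.
Qed.

Lemma seqmax_in (s : seq R) : s != [::] -> seqmax s \in s.
Proof.
case: s => [|a t] //= _; rewrite /seqmax /=.
have := foldr_max_in a (a :: t); rewrite /= inE => /orP[/eqP->|//].
by rewrite inE eqxx.
Qed.

Lemma seqmax_ge (s : seq R) y : y \in s -> y <= seqmax s.
Proof.
case: s => [|a t] //= H; rewrite /seqmax /=.
by apply: (foldr_max_ge (s := a :: t)); rewrite inE H orbT.
Qed.

Variables (X : {set {ffun 'I_n -> bool}}) (pi : 'rV[R]_n) (pi0 : R).
Hypothesis hvalid : forall x, x \in X -> dot pi (vec R x) <= pi0.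

Lemma lam_mem x b i : x \in X -> x i = b -> dot pi (vec R x) \in
  [seq dot pi (vec R x) | x : {ffun 'I_n -> bool} <- enum X & x i == b].
Proof. by move=> xX xi; apply: map_f; rewrite mem_filter mem_enum xX xi eqxx. Qed.

Lemma lam_opt x b i : x \in X -> x i = b -> dot pi (vec R x) = pi0 -> lam X pi b i = pi0.
Proof.
move=> xX xi xo; apply/eqP; rewrite eq_le; apply/andP; split; last first.
  by rewrite -{1}xo; apply: seqmax_ge; apply: lam_mem.
have : lam X pi b i \in [seq dot pi (vec R x) | x : {ffun 'I_n -> bool} <- enum X & x i == b].
  apply: seqmax_in; apply/eqP => E; by have := lam_mem xX xi; rewrite E.
by case/mapP => z; rewrite mem_filter mem_enum => /andP[_ zX] ->; apply: hvalid.
Qed.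

Lemma lam_lt x b i : x \in X -> x i = b ->
  (forall z, z \in X -> z i = b -> dot pi (vec R z) < pi0) -> lam X pi b i < pi0.
Proof.
move=> xX xi H.
have : lam X pi b i \in [seq dot pi (vec R x) | x : {ffun 'I_n -> bool} <- enum X & x i == b].
  apply: seqmax_in; apply/eqP => E; by have := lam_mem xX xi; rewrite E.
by case/mapP => z; rewrite mem_filter mem_enum => /andP[/eqP zi zX] ->; apply: H.
Qed.

Lemma dot_sum (w : {ffun {ffun 'I_n -> bool} -> R}) :
  dot pi (\sum_(x in X) w x *: vec R x) = \sum_(x in X) w x * dot pi (vec R x).
Proof.
rewrite /dot; under eq_bigr do rewrite summxE mulr_sumr.
rewrite exchange_big /=; apply: eq_bigr => x _; rewrite mulr_sumr.
by apply: eq_bigr => j _; rewrite mxE mulrCA.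
Qed.

Lemma face_w y (w : {ffun {ffun 'I_n -> bool} -> R}) :
  (forall x, x \in X -> 0 <= w x) -> \sum_(x in X) w x = 1 ->
  y = \sum_(x in X) w x *: vec R x -> dot pi y = pi0 ->
  forall x, x \in X -> dot pi (vec R x) < pi0 -> w x = 0.
Proof.
move=> w0 w1 -> hd.
have H : \sum_(x in X) w x * (pi0 - dot pi (vec R x)) = 0.
  under eq_bigr do rewrite mulrBr.
  by rewrite sumrB -mulr_suml w1 mul1r -dot_sum hd subrr.
have H2 : forall i, i \in X -> w i * (pi0 - dot pi (vec R i)) = 0.
  apply: (psumr_eq0P _ H) => z zX; apply: mulr_ge0; first exact: w0.
  by rewrite subr_ge0 hvalid.
move=> x xX lt.
have /eqP := H2 x xX.
by rewrite mulf_eq0 subr_eq0 (gt_eqF lt) orbF => /eqP.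
Qed.

Lemma keyA i x x' : i \notin S0 X pi -> x \in X -> x' \in X ->
  dot pi (vec R x) = pi0 -> dot pi (vec R x') = pi0 -> x i = x' i.
Proof.
move=> iS xX x'X xo x'o; apply/eqP; apply: contraR iS => ne.
rewrite inE /lambda subr_eq0.
move: ne; case xb: (x i); case x'b: (x' i) => // _.
  by rewrite (lam_opt xX xb xo) (lam_opt x'X x'b x'o).
by rewrite (lam_opt xX xb xo) (lam_opt x'X x'b x'o).
Qed.

Lemma coordS0 i xs y : i \notin S0 X pi -> xs \in X -> dot pi (vec R xs) = pi0 ->
  face X pi pi0 y -> y 0 i = (xs i)%:R.
Proof.
move=> iS xsX xso [[w [w0 w1 ->]] hd].
have hw := face_w w0 w1 (erefl _) hd.
rewrite summxE.
transitivity (\sum_(x in X) w x * (xs i)%:R); last by rewrite -mulr_suml w1 mul1r.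
apply: eq_bigr => x xX; rewrite !mxE.
have := hvalid xX; rewrite le_eqVlt => /orP[/eqP xo|lt].
  by rewrite (keyA iS xX xsX xo xso).
by rewrite (hw x xX lt) !mul0r.
Qed.

Lemma face_vert x : x \in X -> dot pi (vec R x) = pi0 -> face X pi pi0 (vec R x).
Proof.
move=> xX xo; split=> //; exists [ffun z => (z == x)%:R]; split.
- by move=> z _; rewrite ffunE ler0n.
- rewrite (bigD1 x) //= ffunE eqxx big1 ?addr0 // => z /andP[_ zx].
  by rewrite ffunE (negbTE zx).
- rewrite (bigD1 x) //= ffunE eqxx scale1r big1 ?addr0 // => z /andP[_ zx].
  by rewrite ffunE (negbTE zx) scale0r.
Qed.
End H.

Unset Implicit Arguments.

Lemma rank_part (R : realFieldType) (n d : nat) (S : {set 'I_n}) (M : 'M[R]_(d, n)) :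
  (forall a c, c \notin S -> M a c = 0) -> (\rank M <= #|S|)%N.
Proof.
move=> HM.
pose E : 'M[R]_(n, #|S|) := \matrix_(j, k) (j == enum_val k)%:R.
pose F : 'M[R]_(#|S|, n) := \matrix_(k, j) (j == enum_val k)%:R.
have ME : forall a k, (M *m E) a k = M a (enum_val k).
  move=> a k; rewrite mxE (bigD1 (enum_val k)) //= mxE eqxx mulr1 big1 ?addr0 //.
  by move=> j jk; rewrite mxE (negbTE jk) mulr0.
have -> : M = M *m E *m F.
  apply/matrixP => a c; rewrite [RHS]mxE.
  under eq_bigr do rewrite ME mxE.
  case: (boolP (c \in S)) => cS.
    rewrite (bigD1 (enum_rank_in cS c)) //= enum_rankK_in // eqxx mulr1.
    rewrite big1 ?addr0 // => k kne; case: eqP => [ck|]; last by rewrite mulr0.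
    by move: kne; rewrite -{1}(enum_valK_in cS k) -ck eqxx.
  rewrite HM // big1 // => k _; case: eqP => [ck|]; last by rewrite mulr0.
  by move: cS; rewrite ck enum_valP.
apply: leq_trans (mxrankM_maxl _ _) _; exact: rank_leq_col.
Qed.

Theorem lemma2 (R : realFieldType) (n : nat) (X : {set {ffun 'I_n -> bool}})
  (pi : 'rV[R]_n) (pi0 : R)
  (hn : (1 <= n)%N)
  (hvalid : forall x, x \in X -> dot pi (vec R x) <= pi0)
  (hsupp : exists2 x, x \in X & dot pi (vec R x) = pi0)
  (hboth : forall i : 'I_n, (exists2 x, x \in X & x i = false) /\
                            (exists2 x, x \in X & x i = true)) :
  forall d : nat, affdim (face X pi pi0) d ->
    (d <= #|S0 X pi|)%N /\ (d = 0%N -> #|S0 X pi| = 0%N).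
Proof.
move=> d [[p [pF pI]] hmax]; case: hsupp => xs xsX xso; split.
  move: pI; rewrite /aff_indep /row_free => /eqP <-.
  apply: rank_part => a c cS; rewrite mxE.
  by rewrite (coordS0 hvalid cS xsX xso (pF _)) (coordS0 hvalid cS xsX xso (pF _)) subrr.
move=> d0; subst d.
have uniq : forall x, x \in X -> dot pi (vec R x) = pi0 -> x = xs.
  move=> x xX xo; apply/ffunP => j; apply/eqP/negPn/negP => ne.
  pose q : 'I_2 -> 'rV[R]_n := fun k => if k == ord0 then vec R xs else vec R x.
  suff : (1 <= 0)%N by []. apply: (hmax 1%N q).
    by move=> k; rewrite /q; case: ifP => _; apply: face_vert.
  rewrite /aff_indep /row_free rank_rV.
  set M := \matrix_(_, _) _; suff -> : (M != 0) = true by [].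
  apply/negP => /eqP/matrixP/(_ 0 j); rewrite !mxE /q /=.
  move/eqP; rewrite subr_eq0; move: ne; case: (x j); case: (xs j) => //= _.
    by rewrite eqr_nat.
  by rewrite eqr_nat.
apply/eqP; rewrite cards_eq0; apply/eqP/setP => i; rewrite inE [RHS]inE.
apply/negbTE; rewrite /lambda subr_eq0.
have hlt : forall b, b != xs i -> lam X pi b i < pi0.
  move=> b bne.
  have [z zX zi] : exists2 z, z \in X & z i = b.
    by case: b {bne}; [case: (hboth i) => _ | case: (hboth i)].
  apply: (lam_lt zX zi) => z' z'X z'i.
  have := hvalid _ z'X; rewrite le_eqVlt => /orP[/eqP z'o|//].
  by move: bne; rewrite -z'i (uniq z' z'X z'o) eqxx.
have heq := lam_opt hvalid xsX (erefl (xs i)) xso.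
case E: (xs i) heq => ->.
  by rewrite (lt_eqF (hlt false _)) // E.
by rewrite eq_sym (lt_eqF (hlt true _)) // E.
Qed.
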